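(* Let $h_1',h_2',\dots$ be independent and uniformly distributed on $\mathcal{F}^d$, and let $h_i:=h_i'\circ\psi^{-1}$ (tasks on $\mathcal{X}$). Let $\Phi,\Phi':\{-1,1\}^m\to\mathcal{Z}$ be two fixed representations such that $T:=\Phi\circ\psi$ and $T':=\Phi'\circ\psi$ are bijections of $\mathcal{Z}$. For each $i$ let $g_i,g_i':\mathcal{Z}\to\mathbb{R}$ be the (unique) functions with $g_i\circ\Phi\in\mathcal{H}(h_i)$ and $g_i'\circ\Phi'\in\mathcal{H}(h_i)$, and set $g=(g_1,\dots,g_n)$, $g'=(g_1',\dots,g_n')$. Then, almost surely, $$\lim_{n\to\infty}\frac1n\Big(\widehat{\deg}(g\circ\Phi)-\widehat{\deg}(g'\circ\Phi')\Big)=0,$$ where $\widehat{\deg}(g\circ\Phi)=\sum_{i=1}^n\deg(g_i)+\sum_{j=1}^d\deg(\Phi_j)$ and similarly for $g'\circ\Phi'$.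
   Context: Standing setup: integers $m\ge d\ge 1$, $\mathcal{Z}=\{-1,1\}^d$, $\psi:\mathcal{Z}\to\{-1,1\}^m$ injective, $\mathcal{X}:=\psi(\mathcal{Z})$, latent distribution with full support on $\mathcal{Z}$. For $f:\{-1,1\}^n\to\mathbb{R}$ with Fourier–Walsh expansion $f=\sum_{S\subseteq[n]}\hat f(S)\chi_S$, $\chi_S(x)=\prod_{i\in S}x_i$, $\deg(f)=\max\{|S|:\hat f(S)\ne0\}$ (0 for constants). Tasks are functions on $\mathcal{X}$ (extended arbitrarily to $\{-1,1\}^m$); $\mathcal{H}(h)$ is the set of $f:\{-1,1\}^m\to\mathbb{R}$ agreeing with $h$ on $\mathcal{X}$. Finite-precision convention: fix a finite set $V\subset\mathbb{R}$ with $\{-1,1\}\subseteq V$ and let $\mathcal{F}^d$ be the (finite) set of all functions $\{-1,1\}^d\to V$. *)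

(* Defs.v *)
From HB Require Import structures.
From mathcomp Require Import all_boot all_order all_algebra.
From mathcomp Require Import all_classical all_reals all_analysis.
Set Implicit Arguments. Unset Strict Implicit. Unset Printing Implicit Defensive.
Import Order.TTheory GRing.Theory Num.Theory.
Local Open Scope ring_scope.

(* The hypercube {-1,1}^n, encoded as boolean vectors: a coordinate b : bool
   stands for the real number (-1)^b (false |-> 1, true |-> -1). *)
Definition cube (n : nat) : finType := {ffun 'I_n -> bool}.

Definition sgnb (R : ringType) (b : bool) : R := (-1) ^+ b.

Definition walsh (R : ringType) (n : nat) (S : {set 'I_n}) (x : cube n) : R :=
  \prod_(i in S) sgnb R (x i).

Definition fourier (R : fieldType) (n : nat) (f : cube n -> R) (S : {set 'I_n}) : R :=
  (#|cube n|%:R)^-1 * \sum_(x : cube n) f x * walsh R S x.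

(* deg f = max{|S| : hat f(S) <> 0}, 0 if there is no such S *)
Definition wdeg (R : fieldType) (n : nat) (f : cube n -> R) : nat :=
  \max_(S : {set 'I_n} | fourier f S != 0) #|S|.

Definition coord_fun (R : ringType) (m d : nat) (Phi : cube m -> cube d) (j : 'I_d)
  : cube m -> R := fun x => sgnb R (Phi x j).

Definition deghat (R : fieldType) (m d : nat) (g : nat -> cube d -> R)
  (Phi : cube m -> cube d) (n : nat) : nat :=
  (\sum_(i < n) wdeg (g i) + \sum_(j < d) wdeg (coord_fun R Phi j))%N.

(* Main.v *)
Require Import Defs.
From HB Require Import structures.
From mathcomp Require Import all_boot all_order all_algebra.
From mathcomp Require Import all_classical all_reals all_analysis.
From mathcomp Require Import ring lra zify.
Import Order.TTheory GRing.Theory Num.Theory numFieldNormedType.Exports.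
Local Open Scope ring_scope.
Local Open Scope classical_set_scope.

Lemma sq_split n : (1 <= n)%N -> exists k, ((k.+1)^2 <= n < (k.+2)^2)%N.
Proof.
elim: n => // n IH _.
case: n IH => [|n] IH; first by exists 0%N.
have [k /andP[k1 k2]] := IH isT.
case: (ltnP n.+2 (k.+2 ^ 2)%N) => h.
  by exists k; rewrite h andbT; apply: leqW.
exists k.+1; apply/andP; split.
  have : n.+1 = ((k.+2)^2).-1 by move: k2 h; rewrite !expnS !expn0 !muln1; lia.
  by move: k2 h; lia.
by move: k2 h; rewrite !expnS !expn0 !muln1; lia.
Qed.

Lemma key_bound (R : realType) (x : nat -> R) (M c e : R) (k n : nat) :
  (forall i, `|x i| <= M) -> ((k.+1)^2 <= n < (k.+2)^2)%N ->
  `|\sum_(i < (k.+1)^2) x i| <= e * ((k.+1)^2)%:R ->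
  3 * M + `|c| <= e * k.+1%:R ->
  `|\sum_(i < n) x i + c| <= 2 * e * n%:R.
Proof.
move=> xM /andP[h1 h2] hs hB.
have M0 : 0 <= M by apply: le_trans (xM 0%N).
set m := ((k.+1)^2)%N in h1 h2 hs.
have e0 : 0 <= e.
  have : 0 <= 3 * M + `|c| by rewrite addr_ge0 ?mulr_ge0.
  move=> /le_trans /(_ hB); rewrite pmulr_lge0 //.
rewrite -!(big_mkord xpredT) (@big_cat_nat _ _ _ m 0 n _ _ (leq0n m) h1) /=.
have hd : `|\sum_(m <= i < n) x i| <= (n - m)%:R * M.
  apply: le_trans (ler_norm_sum _ _ _) _.
  by rewrite mulr_natl -sumr_const_nat; apply: ler_sum => i _.
have nm : (n - m <= 2 * k.+1)%N.
  by move: h2; rewrite /m !expnS !expn0 !muln1; lia.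
have nm' : (n - m)%:R <= 2 * k.+1%:R :> R.
  by rewrite -natrM ler_nat.
have mn : m%:R <= n%:R :> R by rewrite ler_nat.
have mk : m%:R = k.+1%:R * k.+1%:R :> R by rewrite /m -natrM expnS expn1.
rewrite big_mkord.
apply: le_trans (ler_normD _ _) _.
apply: le_trans (lerD (ler_normD _ _) (lexx _)) _.
have k1 : 1 <= k.+1%:R :> R by rewrite ler1n.
have c0 : 0 <= `|c| by [].
have : (n - m)%:R * M <= 2 * k.+1%:R * M by rewrite ler_wpM2r.
rewrite mk in hs mn.
nra.
Qed.

Lemma sq_conv (R : realType) (x : nat -> R) (M c : R) :
  (forall i, `|x i| <= M) ->
  (forall j : nat, exists k0, forall k, (k0 <= k)%N ->
      `|\sum_(i < (k.+1)^2) x i| <= j.+1%:R^-1 * ((k.+1)^2)%:R) ->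
  (fun n : nat => n%:R^-1 * (\sum_(i < n) x i + c)) @ \oo --> (0 : R).
Proof.
move=> xM hj; apply/cvgr0Pnorm_le => eps eps0.
set e := eps / 2.
have e0 : 0 < e by rewrite divr_gt0.
pose j := Num.Def.archi_bound (e^-1).
have je : j.+1%:R^-1 <= e.
  rewrite -[e]invrK lef_pV2 ?posrE ?invr_gt0 //.
  apply: le_trans (ltW (archi_boundP _)) _; first by rewrite invr_ge0 ltW.
  by rewrite /j ler_nat.
have [k0 hk0] := hj j.
pose B := Num.Def.archi_bound ((3 * M + `|c|) / e).
pose K := maxn k0 B.
near=> n.
have n1 : (1 <= n)%N by near: n; exact: nbhs_infty_ge.
have nK : ((K.+1)^2 <= n)%N by near: n; exact: nbhs_infty_ge.
have [k /andP[h1 h2]] := @sq_split n n1.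
have kK : (K <= k)%N.
  have : ((K.+1) ^2 < (k.+2)^2)%N by apply: leq_ltn_trans nK h2.
  by rewrite ltn_exp2r.
have hs : `|\sum_(i < (k.+1)^2) x i| <= e * ((k.+1)^2)%:R.
  apply: le_trans (hk0 k _) _.
    by apply: leq_trans kK; rewrite leq_maxl.
  by rewrite ler_wpM2r.
have hB : 3 * M + `|c| <= e * k.+1%:R.
  rewrite -ler_pdivrMl // mulrC.
  have hc : 0 <= (3 * M + `|c|) / e.
    apply: divr_ge0; last exact: ltW.
    have := normr_ge0 c; have := le_trans (normr_ge0 _) (xM 0%N); lra.
  apply: le_trans (ltW (archi_boundP hc)) _.
  rewrite ler_nat; apply: leqW; apply: leq_trans kK; exact: leq_maxr.
have := @key_bound _ x M c e k n xM (introT andP (conj h1 h2)) hs hB.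
have np : 0 < n%:R :> R by rewrite ltr0n.
rewrite normrM normfV normr_nat => H.
rewrite ler_pdivrMl // mulrC.
apply: le_trans H _; rewrite /e; apply: ler_wpM2r; [exact: ltW | lra].
Unshelve. all: by end_near.
Qed.
Lemma wdeg_le (R : fieldType) n (f : cube n -> R) : (wdeg f <= n)%N.
Proof.
rewrite /wdeg; apply/bigmax_leqP => S _.
by rewrite -[X in (_ <= X)%N](card_ord n) max_card.
Qed.

Lemma sum_cross0 (R : comRingType) (K : finType) n (y : K -> R) (i j : 'I_n) :
  i != j -> \sum_k y k = 0 ->
  \sum_(t : {ffun 'I_n -> K}) y (t i) * y (t j) = 0.
Proof.
move=> ij y0.
pose g := fun (l : 'I_n) (k : K) => (if l == i then y k else 1) * (if l == j then y k else 1).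
transitivity (\sum_(t : {ffun 'I_n -> K}) \prod_l g l (t l)).
  apply: eq_bigr => t _; rewrite /g big_split /=.
  by rewrite -!big_mkcond /= !big_pred1_eq.
rewrite -bigA_distr_bigA (bigD1 i) //= /g eqxx (negbTE ij).
by rewrite (eq_bigr (fun k => y k)) ?y0 ?mul0r // => k _; rewrite mulr1.
Qed.

Lemma sum_sq_bound (R : realDomainType) (K : finType) n (y : K -> R) (M : R) :
  \sum_k y k = 0 -> (forall k, `|y k| <= M) ->
  \sum_(t : {ffun 'I_n -> K}) (\sum_(i < n) y (t i)) ^+ 2
    <= n%:R * (#|K| ^ n)%:R * M ^+ 2.
Proof.
move=> y0 yM.
have -> : \sum_(t : {ffun 'I_n -> K}) (\sum_(i < n) y (t i)) ^+ 2 =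
   \sum_(i < n) \sum_(t : {ffun 'I_n -> K}) y (t i) ^+ 2.
  transitivity (\sum_(t : {ffun 'I_n -> K}) \sum_(i < n) \sum_(j < n) y (t i) * y (t j)).
    apply: eq_bigr => t _; rewrite expr2 mulr_suml; apply: eq_bigr => i _.
    by rewrite mulr_sumr.
  rewrite exchange_big /=; apply: eq_bigr => i _.
  rewrite exchange_big /= (bigD1 i) //=. rewrite [X in _ + X]big1 ?addr0.
    by apply: eq_bigr => t _; rewrite expr2.
  by move=> j ji; apply: sum_cross0 => //; rewrite eq_sym.
apply: (@le_trans _ _ (\sum_(i < n) (#|K| ^ n)%:R * M ^+ 2)); last first.
  by rewrite sumr_const card_ord -mulrA [n%:R * _]mulr_natl.
apply: ler_sum => i _.
have -> : ((#|K| ^ n)%:R * M ^+ 2) = \sum_(t : {ffun 'I_n -> K}) M ^+ 2.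
  by rewrite sumr_const card_ffun card_ord mulr_natl.
apply: ler_sum => t _.
rewrite -real_normK ?num_real //; apply: lerXn2r; rewrite ?nnegrE //.
  exact: le_trans (yM (t i)).
Qed.

Section meas.
Local Open Scope ereal_scope.

Lemma mu_bigU_le d (T : measurableType d) (R : realType) (mu : {measure set T -> \bar R})
  (I : Type) (r : seq I) (P : pred I) (F : I -> set T) :
  (forall i, measurable (F i)) ->
  mu (\big[setU/set0]_(i <- r | P i) F i) <= \sum_(i <- r | P i) mu (F i).
Proof.
move=> mF; elim: r => [|a r IH]; first by rewrite !big_nil measure0.
rewrite !big_cons; case: (P a) => //.
apply: le_trans (measureU2 _ _ _) _ => //; first exact: bigsetU_measurable.
exact: leeD2l.
Qed.

Lemma mu_bigU_eq d (T : measurableType d) (R : realType) (mu : {measure set T -> \bar R})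
  (I : eqType) (r : seq I) (F : I -> set T) :
  uniq r -> (forall i, measurable (F i)) ->
  (forall i j, i != j -> F i `&` F j = set0) ->
  mu (\big[setU/set0]_(i <- r) F i) = \sum_(i <- r) mu (F i).
Proof.
move=> + mF dF; elim: r => [|a r IH]; first by rewrite !big_nil measure0.
rewrite /= => /andP[ar ur]; rewrite !big_cons measureU //.
- by congr (_ + _); exact: IH.
- exact: bigsetU_measurable.
rewrite big_distrr /= big1_seq // => i /andP[_ ir]; apply: dF.
by apply: contraNneq ar => ->.
Qed.

Lemma in_bigsetU (T : Type) (I : eqType) (r : seq I) (P : pred I) (F : I -> set T) w :
  (\big[setU/set0]_(i <- r | P i) F i) w <-> exists i, [/\ i \in r, P i & F i w].
Proof.
elim: r => [|a r IH]; first by rewrite big_nil; split => // -[i []].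
rewrite big_cons; case: ifP => Pa; split.
- case=> [Fa|/IH[i [ir Pi Fi]]]; first by exists a; rewrite mem_head.
  by exists i; rewrite in_cons ir orbT.
- case=> i []; rewrite in_cons => /orP[/eqP->|ir] Pi Fi; first by left.
  by right; apply/IH; exists i.
- move=> /IH[i [ir Pi Fi]]; by exists i; rewrite in_cons ir orbT.
- case=> i []; rewrite in_cons => /orP[/eqP->|ir] Pi Fi; first by rewrite Pa in Pi.
  by apply/IH; exists i.
Qed.

End meas.

Lemma series_inv_sq (R : realType) (C : R) : 0 <= C ->
  (\sum_(0 <= k <oo) (C / ((k.+1 ^ 2)%N)%:R)%:E < +oo)%E.
Proof.
move=> C0.
have ps : forall n, (\sum_(0 <= k < n) ((k.+1 ^ 2)%N%:R : R)^-1 <= 2 - 2 / n.+1%:R)%R.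
  elim => [|n IH]; first by rewrite big_geq // divr1 subrr.
  rewrite big_nat_recr //=; apply: le_trans (lerD IH (lexx _)) _.
  set a : R := n.+1%:R.
  have a1 : (1 <= a)%R by rewrite ler1n.
  have -> : (n.+2%:R : R) = a + 1 by rewrite /a -natr1.
  have -> : ((n.+1 ^ 2)%N%:R : R) = a * a by rewrite /a natrX expr2.
  have h : (2 / a - 2 / (a + 1) - (a * a)^-1 = (a - 1) / (a * a * (a + 1)))%R.
    field; have n0 : (0 <= n%:R :> R) := ler0n _ _.
    by apply/andP; split; rewrite gt_eqF //; lra.
  have : (0 <= (a - 1) / (a * a * (a + 1)))%R.
    apply: divr_ge0; first lra.
    by apply: mulr_ge0; [apply: mulr_ge0|]; lra.
  rewrite -h; clearbody a; move=> hh; lra.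
apply: (@le_lt_trans _ _ (C * 2)%:E); last exact: ltry.
rewrite (cvg_lim _ (ereal_nondecreasing_cvgn _)) //; last first.
  by apply: ereal_nondecreasing_series => n _ _; rewrite lee_fin divr_ge0.
apply/ereal_supP => _ [n _ <-] /=.
rewrite sumEFin lee_fin -mulr_sumr ler_wpM2l //.
apply: le_trans (ps n) _.
have : (0 <= 2 / n.+1%:R :> R)%R by rewrite divr_ge0.
set x := 2 / _; lra.
Qed.


Lemma count_bound (R : realType) (K : finType) (y : K -> R) (M q e : R) n :
  \sum_k y k = 0 -> (forall k, `|y k| <= M) -> q * #|K|%:R = 1 -> 0 <= q ->
  0 < e -> (0 < n)%N ->
  \sum_(t : {ffun 'I_n -> K} | e * n%:R < `|\sum_(i < n) y (t i)|) q ^+ n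
    <= M ^+ 2 / (e ^+ 2 * n%:R).
Proof.
move=> y0 yM qK q0 e0 n0.
set en := e * n%:R.
have en0 : 0 < en by rewrite mulr_gt0 // ltr0n.
apply: (@le_trans _ _ (\sum_(t : {ffun 'I_n -> K}) q ^+ n * ((\sum_(i < n) y (t i)) ^+ 2 / en ^+ 2))).
  rewrite [X in _ <= X](bigID (fun t : {ffun 'I_n -> K} => en < `|\sum_(i < n) y (t i)|)) /=.
  rewrite -[X in X <= _]addr0; apply: lerD; last first.
    apply: sumr_ge0 => t _; apply: mulr_ge0; first exact: exprn_ge0.
    by apply: divr_ge0; rewrite ?sqr_ge0 // exprn_ge0 // ltW.
  apply: ler_sum => t ht.
  rewrite -[X in X <= _]mulr1 ler_wpM2l ?exprn_ge0 //.
  rewrite ler_pdivlMr ?exprn_gt0 // mul1r -[X in _ <= X]real_normK ?num_real //.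
  move: ht; set u := `|_|; move: en0; clearbody en; move=> *; nra.
rewrite -mulr_sumr.
under eq_bigr do rewrite mulrC.
rewrite -mulr_sumr mulrA.
have hb := @sum_sq_bound _ _ n y M y0 yM.
apply: le_trans (ler_wpM2l _ hb) _.
  by apply: mulr_ge0; [exact: exprn_ge0 | rewrite invr_ge0 exprn_ge0 // ltW].
have qn : q ^+ n * (#|K| ^ n)%:R = 1 by rewrite natrX -exprMn qK expr1n.
rewrite /en.
have nn : (n%:R : R) != 0 by rewrite pnatr_eq0 -lt0n.
have ee : e != 0 by rewrite gt_eqF.
have qnz : q != 0 by apply/eqP => q0'; move: qK; rewrite q0' mul0r => /eqP; rewrite eq_sym oner_eq0.
have qn' : (#|K| ^ n)%:R = (q ^+ n)^-1 :> R.
  by apply: (mulfI (expf_neq0 n qnz)); rewrite qn mulfV ?expf_neq0.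
rewrite qn' le_eqVlt; apply/orP; left; apply/eqP.
field.
by rewrite nn ee expf_neq0.
Qed.

Lemma nat_dist_le (R : realType) (a b n : nat) : (a <= n)%N -> (b <= n)%N ->
  `|a%:R - b%:R : R| <= n%:R.
Proof.
rewrite -!(ler_nat R) => ha hb.
have a0 := ler0n R a; have b0 := ler0n R b.
move: ha hb a0 b0; set x := a%:R; set y := b%:R; set z := n%:R => *.
rewrite ler_norml; apply/andP; split; lra.
Qed.

Lemma sum_wdeg_reindex (R : realType) (V : seq R) d (s s' : cube d -> cube d) :
  cancel s' s ->
  \sum_(k : {ffun cube d -> 'I_(size V)}) ((wdeg (fun y => nth 0 V (k (s y))))%:R : R)
  = \sum_(k : {ffun cube d -> 'I_(size V)}) (wdeg (fun y => nth 0 V (k y)))%:R.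
Proof.
move=> ss'.
have hi : injective (fun k : {ffun cube d -> 'I_(size V)} => [ffun x => k (s x)]).
  move=> k1 k2 /ffunP h; apply/ffunP => z.
  by have := h (s' z); rewrite !ffunE ss'.
rewrite [RHS](reindex_inj hi) /=; apply: eq_bigr => k _.
by congr (_%:R); congr wdeg; apply: funext => y; rewrite ffunE.
Qed.
Lemma prod_const_seq (R : comRingType) (I : Type) (s : seq I) (x : R) :
  \prod_(i <- s) x = x ^+ size s.
Proof. by elim: s => [|a s IH]; rewrite ?big_nil ?big_cons ?IH ?exprS. Qed.

Theorem theorem3 (R : realType) (d0 : measure_display) (Omega : measurableType d0)
  (P : probability Omega R)
  (m d : nat) (V : seq R) (psi : cube d -> cube m)
  (Phi Phi' : cube m -> cube d)
  (H : nat -> Omega -> {ffun cube d -> R})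
  (G G' : nat -> Omega -> cube d -> R) :
  (1 <= d)%N -> (d <= m)%N ->
  uniq V -> (-1) \in V -> 1 \in V ->
  injective psi ->
  bijective (Phi \o psi) -> bijective (Phi' \o psi) ->
  (* each h_i' is a random element of F^d *)
  (forall i (f : {ffun cube d -> R}), measurable [set w | H i w = f]) ->
  (* uniformly distributed on F^d = functions {-1,1}^d -> V *)
  (forall i (f : {ffun cube d -> R}), (forall x, f x \in V) ->
     P [set w | H i w = f] = (((size V) ^ #|cube d|)%:R)^-1%:E) ->
  (* mutually independent *)
  (forall (s : seq nat) (f : nat -> {ffun cube d -> R}), uniq s ->
     P (\bigcap_(i in [set` s]) [set w | H i w = f i]) =
     (\prod_(i <- s) P [set w | H i w = f i])%E) ->
  (* g_i o Phi agrees with h_i = h_i' o psi^{-1} on X = psi(Z); likewise g_i' o Phi' *)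
  (forall i w z, G i w (Phi (psi z)) = H i w z) ->
  (forall i w z, G' i w (Phi' (psi z)) = H i w z) ->
  {ae P, forall w,
     (fun n : nat => n%:R^-1 *
        ((deghat (G ^~ w) Phi n)%:R - (deghat (G' ^~ w) Phi' n)%:R) : R)
       @ \oo --> (0 : R)}.
Proof.
move=> d1 dm uV Vm1 V1 psi_inj [Ti TK KT] [Ti' TK' KT'] mH hU hI hG hG'.
pose K := {ffun cube d -> 'I_(size V)}.
have Vpos : (0 < size V)%N by rewrite lt0n size_eq0; apply/eqP => V0; rewrite V0 in V1.
pose emb (k : K) : {ffun cube d -> R} := [ffun x => nth 0 V (k x)].
have embV : forall k x, emb k x \in V by move=> k x; rewrite ffunE mem_nth.
have emb_inj : injective emb.
  move=> k1 k2 /ffunP h; apply/ffunP => x; apply: val_inj.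
  by have := h x; rewrite !ffunE => /eqP; rewrite nth_uniq // => /eqP.
pose q : R := ((size V ^ #|cube d|)%:R)^-1.
have hq : forall i k, P [set w | H i w = emb k] = q%:E by move=> i k; apply: hU.
have cardK : #|K| = (size V ^ #|cube d|)%N by rewrite card_ffun card_ord.
have qK : q * #|K|%:R = 1.
  by rewrite cardK mulVf // pnatr_eq0 expn_eq0 negb_and -lt0n Vpos.
have q0 : 0 <= q by rewrite invr_ge0 ler0n.
pose phi (h : {ffun cube d -> R}) : R :=
  (wdeg (fun y => h (Ti y)))%:R - (wdeg (fun y => h (Ti' y)))%:R.
have phiB : forall h, `|phi h| <= d%:R by move=> h; apply: nat_dist_le; exact: wdeg_le.
have phi0 : \sum_(k : K) phi (emb k) = 0.
  rewrite sumrB.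
  have e1 : forall s s' : cube d -> cube d, cancel s' s ->
     \sum_(k : K) (wdeg (fun y => emb k (s y)))%:R = \sum_(k : K) (wdeg (fun y => nth 0 V (k y)))%:R :> R.
    move=> s s' ss'; rewrite -(@sum_wdeg_reindex _ V _ s s' ss'); apply: eq_bigr => k _.
    by congr (_%:R); congr wdeg; apply: funext => y; rewrite ffunE.
  by rewrite (e1 _ _ TK) (e1 _ _ TK') subrr.
pose c : R := (\sum_(j < d) wdeg (coord_fun R Phi j))%:R - (\sum_(j < d) wdeg (coord_fun R Phi' j))%:R.
have decomp : forall w n, n%:R^-1 * ((deghat (G ^~ w) Phi n)%:R - (deghat (G' ^~ w) Phi' n)%:R)
   = n%:R^-1 * (\sum_(i < n) phi (H i w) + c).
  move=> w n; congr (_ * _); rewrite /deghat /c /phi !natrD !natr_sum.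
  have eG : forall i, wdeg (G i w) = wdeg (fun y => H i w (Ti y)).
    move=> i; congr wdeg; apply: funext => y.
    by rewrite -{1}[y]KT /= hG.
  have eG' : forall i, wdeg (G' i w) = wdeg (fun y => H i w (Ti' y)).
    move=> i; congr wdeg; apply: funext => y.
    by rewrite -{1}[y]KT' /= hG'.
  under eq_bigr do rewrite eG.
  under [X in _ - (X + _)]eq_bigr do rewrite eG'.
  by rewrite sumrB opprD addrACA.
pose U i := \big[setU/set0]_(k : K) [set w | H i w = emb k].
have mU : forall i, measurable (U i).
  by move=> i; apply: bigsetU_measurable => k _; exact: mH.
have PU : forall i, P (U i) = 1%E.
  move=> i; rewrite /U mu_bigU_eq //; last 2 first.
  - exact: index_enum_uniq.
  - move=> k1 k2 k12; apply/seteqP; split => w //= [h1 h2].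
    by move: k12; rewrite -(inj_eq emb_inj) -h1 -h2 eqxx.
  rewrite (eq_bigr (fun _ => q%:E)); last by move=> k _; exact: hq.
  by rewrite sumEFin sumr_const -mulr_natr qK.
have N0neg : P.-negligible (\bigcup_i ~` U i).
  apply: negligible_bigcup => i; apply/negligibleP; first exact: measurableC.
  transitivity (1 - P (U i))%E; first exact: probability_setC.
  by rewrite PU subee.
pose n_ (k : nat) := ((k.+1) ^ 2)%N.
pose e_ (j : nat) : R := j.+1%:R^-1.
have e_pos : forall j, 0 < e_ j by move=> j; rewrite invr_gt0 ltr0n.
pose kdef : K := [ffun _ => Ordinal Vpos].
pose ttf (n : nat) (t : {ffun 'I_n -> K}) (i : nat) : K :=
  if @insub _ (fun i => i < n)%N _ i is Some o then t o else kdef.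
pose Ct (n : nat) (t : {ffun 'I_n -> K}) :=
  \bigcap_(i in [set` iota 0 n]) [set w | H i w = emb (ttf n t i)].
have mC : forall n t, measurable (Ct n t).
  by move=> n t; apply: bigcap_measurableType => i _; exact: mH.
have PC : forall n t, P (Ct n t) = (q ^+ n)%:E.
  move=> n t; rewrite /Ct (hI (iota 0 n) (fun i => emb (ttf n t i))) ?iota_uniq //.
  rewrite (eq_bigr (fun _ => q%:E)); last by move=> i _; exact: hq.
  by rewrite prodEFin prod_const_seq size_iota.
pose bad (j n : nat) (t : {ffun 'I_n -> K}) :=
  e_ j * n%:R < `|\sum_(i < n) phi (emb (t i))|.
pose B j k := \big[setU/set0]_(t : {ffun 'I_(n_ k) -> K} | bad j (n_ k) t) Ct (n_ k) t.
have mB : forall j k, measurable (B j k).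
  by move=> j k; apply: bigsetU_measurable => t _; exact: mC.
have PB : forall j k, (P (B j k) <= (d%:R ^+ 2 / e_ j ^+ 2 / (n_ k)%:R)%:E)%E.
  move=> j k; apply: le_trans (@mu_bigU_le _ _ _ P _ _ _ _ (fun t => mC _ t)) _.
  rewrite (eq_bigr (fun _ => (q ^+ (n_ k))%:E)); last by move=> t _; exact: PC.
  rewrite sumEFin lee_fin -mulrA -invfM.
  apply: (@count_bound R K (fun k => phi (emb k)) d%:R q (e_ j) (n_ k) phi0 (fun k => phiB (emb k)) qK q0 (e_pos j)).
  by rewrite /n_ expn_gt0.
have Lneg : forall j, P.-negligible (lim_sup_set (B j)).
  move=> j; apply/negligibleP.
    by apply: bigcap_measurableType => n _; apply: bigcup_measurable => k _; exact: mB.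
  apply: lim_sup_set_cvg0 => //.
  have C0 : 0 <= d%:R ^+ 2 / e_ j ^+ 2 :> R by rewrite divr_ge0 // exprn_ge0 // ltW.
  apply: le_lt_trans (@series_inv_sq R _ C0).
  by apply: lee_nneseries => [i _ _|i _]; [exact: measure_ge0 | exact: PB].
pose Nset := (\bigcup_i ~` U i) `|` \bigcup_j lim_sup_set (B j).
have Nneg : P.-negligible Nset by apply: negligibleU => //; apply: negligible_bigcup.
apply: (negligibleS _ Nneg) => w /=.
apply: contra_notP => Nw.
have Uw : forall i, U i w.
  by move=> i; apply: contrapT => nU; apply: Nw; left; exists i.
have Lw : forall j, ~ lim_sup_set (B j) w.
  by move=> j h; apply: Nw; right; exists j.
pose kw (i : nat) : K := if [pick k | H i w == emb k] is Some k then k else kdef.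
have hk : forall i, emb (kw i) = H i w.
  move=> i; rewrite /kw; case: pickP => [k /eqP -> //|none].
  have /in_bigsetU [k [_ _ hk]] := Uw i.
  by move: (none k); rewrite hk eqxx.
rewrite (funext (decomp w)).
apply: (@sq_conv R (fun i => phi (H i w)) d%:R c) => [i|j]; first exact: phiB.
have [k0 hk0] : exists k0, forall k, (k0 <= k)%N -> ~ B j k w.
  apply: contrapT => hne; apply: (Lw j) => n _.
  apply: contrapT => hn; apply: hne; exists n => k nk Bk; apply: hn; by exists k.
exists k0 => k kk0; rewrite leNgt; apply/negP => hlt; apply: (hk0 k kk0).
apply/in_bigsetU; exists [ffun i : 'I_(n_ k) => kw i]; split; first by rewrite mem_index_enum.
  rewrite /bad (eq_bigr (fun i : 'I_(n_ k) => phi (H i w))); first exact: hlt.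
  by move=> i _; rewrite ffunE hk.
move=> i hi0; have : (i \in iota 0 (n_ k)) := hi0; rewrite mem_iota add0n => /andP[_ hi].
rewrite /ttf; case: insubP => [u0 _ oi|]; last by rewrite hi.
by rewrite ffunE hk oi.
Qed.
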